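(* Let $f:\mathcal X\times\mathcal Y\to\{0,1\}$, let $\mu:\mathcal X\times\mathcal Y\to[0,1]$ be a (not necessarily normalized) product function $\mu(x,y)=\mu_X(x)\mu_Y(y)$, let $\epsilon,\delta\in(0,1)$, let $\langle w_R\rangle$ be an optimal solution of the LP defining $\mathrm{srec}^{1,\mu}_{\epsilon,\delta}(f)$ and $D=\sum_R w_R>0$ its value. Let $X_0\subseteq\mathcal X$, $Y_0\subseteq\mathcal Y$, $X_1=\mathcal X\setminus X_0$, $Y_1=\mathcal Y\setminus Y_0$, $R^{(ij)}=X_i\times Y_j$, and assume $\mu(R^{(ij)})>0$ for all $i,j\in\{0,1\}$ and $\mu_1(R^{(00)})\le\sqrt\delta\,\mu_0(R^{(00)})$. Let $\mu^{(ij)}$ be $\mu$ restricted to $R^{(ij)}$ (zero outside). For $i,j$ with $\mu_1(R^{(ij)})>0$ let $$\epsilon^{(ij)}=1-\frac{\sum_{(x,y)\in f^{-1}(1)\cap R^{(ij)}}\mu(x,y)\sum_{R\ni(x,y)}w_R}{\mu_1(R^{(ij)})}.$$ Then there exists $(ij)\in\{(01),(10)\}$ such that either (a) $2\mu^{(ij)}(f^{-1}(1))\le\mu^{(ij)}(f^{-1}(0))$, or (b) $\mathrm{srec}^{1,\mu^{(ij)}}_{\epsilon^{(ij)}+30\delta^{1/4},\,\delta}(f)\le0.9D$.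
   Context: A rectangle is $A\times B$ with $A\subseteq\mathcal X,B\subseteq\mathcal Y$. For nonnegative $\mu$: $\mu_z(R)=\mu(R\cap f^{-1}(z))$, $\mu_z=\mu_z(\mathcal X\times\mathcal Y)$. $\mathrm{srec}^{z,\mu}_{\epsilon,\delta}(f)$ is the optimal value of: minimize $\sum_R w_R$ over $w_R\ge0$ (one per rectangle) subject to $\sum_{(x,y)\in f^{-1}(z)}\mu(x,y)\sum_{R\ni(x,y)}w_R\ge(1-\epsilon)\mu_z$; $\sum_{R\ni(x,y)}w_R\le\delta$ for all $(x,y)\notin f^{-1}(z)$; $\sum_{R\ni(x,y)}w_R\le1$ for all $(x,y)$. (For $\epsilon\ge1$ the covering constraint is vacuous.) *)

(* Defs.v *)
From HB Require Import structures.
From mathcomp Require Import all_boot all_order all_algebra.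
Set Implicit Arguments. Unset Strict Implicit. Unset Printing Implicit Defensive.
Import Order.TTheory GRing.Theory Num.Theory.
Local Open Scope ring_scope.

Section SRec.
Variables (R : rcfType) (X Y : finType).

Definition rect := ({set X} * {set Y})%type.

Definition cov (w : rect -> R) (x : X) (y : Y) : R :=
  \sum_(r : rect | (x \in r.1) && (y \in r.2)) w r.

Definition massz (f : X -> Y -> bool) (mu : X -> Y -> R) (z : bool) : R :=
  \sum_(x : X) \sum_(y : Y | f x y == z) mu x y.

Definition restr (A : {set X}) (B : {set Y}) (mu : X -> Y -> R) : X -> Y -> R :=
  fun x y => if (x \in A) && (y \in B) then mu x y else 0.

Definition massR (mu : X -> Y -> R) (A : {set X}) (B : {set Y}) : R :=
  \sum_(x in A) \sum_(y in B) mu x y.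

Definition srec_feasible (f : X -> Y -> bool) (mu : X -> Y -> R) (z : bool)
    (eps delta : R) (w : rect -> R) : Prop :=
  [/\ forall r, 0 <= w r,
      (1 - eps) * massz f mu z <=
        \sum_(x : X) \sum_(y : Y | f x y == z) mu x y * cov w x y,
      forall x y, f x y != z -> cov w x y <= delta
    & forall x y, cov w x y <= 1].

Definition lp_value (w : rect -> R) : R := \sum_(r : rect) w r.

Definition srec_optimal f mu z eps delta (w : rect -> R) : Prop :=
  srec_feasible f mu z eps delta w /\
  forall w', srec_feasible f mu z eps delta w' -> lp_value w <= lp_value w'.

(* srec^{z,mu}_{eps,delta}(f) <= c : since the LP optimum is attained when the
   LP is feasible (and is +infinity otherwise), this says some feasible
   solution has value <= c. *)
Definition srec_le f mu z eps delta (c : R) : Prop :=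
  exists w, srec_feasible f mu z eps delta w /\ lp_value w <= c.

Definition eps_blk f mu (w : rect -> R) (A : {set X}) (B : {set Y}) : R :=
  1 - (\sum_(x : X) \sum_(y : Y | f x y) restr A B mu x y * cov w x y)
      / massz f (restr A B mu) true.

Definition blk_concl f mu (w : rect -> R) (delta D : R) A B : Prop :=
  let m := restr A B mu in
  2 * massz f m true <= massz f m false \/
  srec_le f m true (eps_blk f mu w A B + 30 * Num.sqrt (Num.sqrt delta)) delta
          (9 / 10 * D).

End SRec.

(* Main.v *)
Require Import Defs.
From HB Require Import structures.
From mathcomp Require Import all_boot all_order all_algebra.
From mathcomp Require Import ring lra.
Import Order.TTheory GRing.Theory Num.Theory.
Local Open Scope ring_scope.
Set Implicit Arguments. Unset Strict Implicit. Unset Printing Implicit Defensive.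

Lemma key_div (R : rcfType) (x y u v s : R) : 0 <= x -> 0 <= u -> 0 <= v -> 0 < s ->
  x * y = u * v -> x <= y -> 2 * s * x <= u + s ^+ 2 * v.
Proof.
move=> hx hu hv hs hxy hle.
have h1 : x * x <= u * v by rewrite -hxy ler_wpM2l.
rewrite leNgt; apply/negP => hlt.
have h0 : 0 <= u + s ^+ 2 * v by rewrite addr_ge0 // mulr_ge0 // exprn_ge0 // ltW.
have h2 : (u + s ^+ 2 * v) * (u + s ^+ 2 * v) < (2 * s * x) * (2 * s * x).
  by rewrite ltr_pM // ltW.
have h3 : 0 <= (u - s ^+ 2 * v) ^+ 2 by rewrite sqr_ge0.
have h4 : 0 <= s * s by rewrite mulr_ge0 // ltW.
have h5 : (s * s) * (x * x) <= (s * s) * (u * v) by rewrite ler_wpM2l.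
nra.
Qed.

Lemma key (R : rcfType) (a b c d ma mb mc md s : R) :
  0 <= a -> 0 <= b -> 0 <= c -> 0 <= d -> 0 < ma -> 0 < mb -> 0 < mc -> 0 < md -> 0 < s ->
  a * d = b * c -> ma * md = mb * mc -> b * mc <= c * mb ->
  2 * s * b * ma * md <= mb * (a * md + s ^+ 2 * d * ma).
Proof.
move=> ha hb hc hd hma hmb hmc hmd hs had hm hle.
have hle' : b / mb <= c / mc.
  by rewrite ler_pdivrMr // mulrAC ler_pdivlMr.
have hxy : b / mb * (c / mc) = a / ma * (d / md).
  by rewrite !mulf_div had hm.
have H := @key_div R (b / mb) (c / mc) (a / ma) (d / md) s
  (divr_ge0 hb (ltW hmb)) (divr_ge0 ha (ltW hma)) (divr_ge0 hd (ltW hmd)) hs hxy hle'.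
have hpos : 0 < mb * ma * md by rewrite !mulr_gt0.
rewrite -(ler_pM2r hpos) in H.
have e1 : 2 * s * (b / mb) * (mb * ma * md) = 2 * s * b * ma * md.
  by field; rewrite gt_eqF.
have e2 : (a / ma + s ^+ 2 * (d / md)) * (mb * ma * md) = mb * (a * md + s ^+ 2 * d * ma).
  by field; rewrite ?gt_eqF.
by rewrite -e1 -e2.
Qed.

Section Help.
Variables (R : rcfType) (X Y : finType).
Implicit Types (mu m g : X -> Y -> R) (A : {set X}) (B : {set Y}) (f : X -> Y -> bool).

Definition ind (r : rect X Y) (x : X) (y : Y) : R :=
  if (x \in r.1) && (y \in r.2) then 1 else 0.

Definition pm (mu : X -> Y -> R) (A : {set X}) (B : {set Y}) (r : rect X Y) : R :=
  \sum_(x : X) \sum_(y : Y) restr A B mu x y * ind r x y.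

Definition tot (m : X -> Y -> R) : R := \sum_(x : X) \sum_(y : Y) m x y.

Lemma exch mu A B (w : rect X Y -> R) :
  \sum_(r : rect X Y) w r * pm mu A B r =
  \sum_(x : X) \sum_(y : Y) restr A B mu x y * cov w x y.
Proof.
rewrite /pm.
under eq_bigr => r _ do rewrite big_distrr /=.
rewrite exchange_big /=; apply: eq_bigr => x _.
under eq_bigr => r _ do rewrite big_distrr /=.
rewrite exchange_big /=; apply: eq_bigr => y _.
rewrite /cov big_distrr /= [RHS]big_mkcond /=; apply: eq_bigr => r _.
by rewrite /ind; case: ifP => _; rewrite ?mulr1 ?mulr0 // mulrC.
Qed.

Lemma covD (w1 w2 : rect X Y -> R) x y :
  cov (fun r => w1 r + w2 r) x y = cov w1 x y + cov w2 x y.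
Proof. by rewrite /cov big_split. Qed.

Lemma cov_le (w1 w2 : rect X Y -> R) x y :
  (forall r, w1 r <= w2 r) -> cov w1 x y <= cov w2 x y.
Proof. by move=> h; rewrite /cov; apply: ler_sum => r _. Qed.

Lemma pm_prod mu (muX : X -> R) (muY : Y -> R) A B r :
  (forall x y, mu x y = muX x * muY y) ->
  pm mu A B r = (\sum_(x : X) (if (x \in A) && (x \in r.1) then muX x else 0)) *
                (\sum_(y : Y) (if (y \in B) && (y \in r.2) then muY y else 0)).
Proof.
move=> hm; rewrite /pm big_distrl /=; apply: eq_bigr => x _.
rewrite big_distrr /=; apply: eq_bigr => y _.
rewrite /restr /ind hm.
by case: (x \in A); case: (x \in r.1); case: (y \in B); case: (y \in r.2);
  rewrite /= ?(mulr1, mulr0, mul0r).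
Qed.

Lemma pm_full mu A B : pm mu A B (setT, setT) = tot (restr A B mu).
Proof.
rewrite /pm /tot; apply: eq_bigr => x _; apply: eq_bigr => y _.
by rewrite /ind !inE mulr1.
Qed.

Lemma massR_tot mu A B : massR mu A B = tot (restr A B mu).
Proof.
rewrite /massR /tot big_mkcond; apply: eq_bigr => x _.
rewrite big_mkcond /=; case: ifP => hx.
  by apply: eq_bigr => y _; rewrite /restr hx.
by rewrite big1 // => y _; rewrite /restr hx.
Qed.

Lemma pm_ge0 mu A B r : (forall x y, 0 <= mu x y) -> 0 <= pm mu A B r.
Proof.
move=> h; apply: sumr_ge0 => x _; apply: sumr_ge0 => y _.
rewrite /restr /ind; case: ifP => _; case: ifP => _; rewrite ?mulr1 ?mulr0 //.
Qed.

Lemma restr_ge0 mu A B x y : (forall x y, 0 <= mu x y) -> 0 <= restr A B mu x y.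
Proof. by move=> h; rewrite /restr; case: ifP. Qed.

Lemma split_f (f : X -> Y -> bool) (g : X -> Y -> R) :
  \sum_(x : X) \sum_(y : Y) g x y =
  \sum_(x : X) \sum_(y : Y | f x y == true) g x y +
  \sum_(x : X) \sum_(y : Y | f x y == false) g x y.
Proof.
rewrite -big_split /=; apply: eq_bigr => x _.
rewrite (bigID (fun y => f x y == true)) /=; congr (_ + _).
by apply: eq_bigl => y; case: (f x y).
Qed.

Lemma tot_massz f m : tot m = massz f m true + massz f m false.
Proof. exact: split_f. Qed.


Lemma block_ok f mu (w w' : rect X Y -> R) delta D A B :
  (forall x y, 0 <= mu x y) ->
  (forall x y, f x y != true -> cov w x y <= delta) ->
  (forall x y, cov w x y <= 1) ->
  (forall r, 0 <= w' r) -> (forall r, w' r <= w r) ->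
  0 < tot (restr A B mu) ->
  lp_value w' <= 9 / 10 * D ->
  0 <= Num.sqrt (Num.sqrt delta) ->
  \sum_(x : X) \sum_(y : Y) restr A B mu x y * (cov w x y - cov w' x y)
     <= 2 * Num.sqrt (Num.sqrt delta) * tot (restr A B mu) ->
  blk_concl f mu w delta D A B.
Proof.
move=> hmu hz h1 hw0 hww htot hval hs hloss.
rewrite /blk_concl.
set s := Num.sqrt (Num.sqrt delta) in hs hloss *.
set m := restr A B mu in htot hloss *.
have hm0 : forall x y, 0 <= m x y by move=> x y; apply: restr_ge0.
have hPZ := tot_massz f m.
set P := massz f m true in hPZ *.
set Z := massz f m false in hPZ *.
case: (leP (2 * P) Z) => hZ; [by left | right].
have hP : 0 < P by lra.
exists w'; split => //; split => //.
- rewrite /eps_blk -/m -/P.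
  set C := \sum_(x : X) \sum_(y : Y | f x y) m x y * cov w x y.
  set C' := \sum_(x : X) \sum_(y : Y | f x y == true) m x y * cov w' x y.
  have eC : C = \sum_(x : X) \sum_(y : Y | f x y == true) m x y * cov w x y.
    by apply: eq_bigr => x _; apply: eq_bigl => y; case: (f x y).
  have hCC : C - C' <= 2 * s * tot m.
    apply: le_trans hloss.
    rewrite eC /C' -sumrB.
    have -> : \sum_(x : X) (\sum_(y : Y | f x y == true) m x y * cov w x y -
       \sum_(y : Y | f x y == true) m x y * cov w' x y) =
       \sum_(x : X) \sum_(y : Y | f x y == true) m x y * (cov w x y - cov w' x y).
      by apply: eq_bigr => x _; rewrite -sumrB; apply: eq_bigr => y _; rewrite mulrBr.
    rewrite (split_f f (fun x y => m x y * (cov w x y - cov w' x y))) lerDl.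
    apply: sumr_ge0 => x _; apply: sumr_ge0 => y _; apply: mulr_ge0 => //.
    by rewrite subr_ge0; apply: cov_le.
  have -> : (1 - (1 - C / P + 30 * s)) * P = C - 30 * s * P.
    by field; rewrite gt_eqF.
  have hsZ : s * Z <= s * (2 * P) by rewrite ler_wpM2l // ltW.
  rewrite hPZ in hCC.
  nra.
- move=> x y hf; apply: le_trans (hz x y hf); exact: cov_le.
- move=> x y; apply: le_trans (h1 x y); exact: cov_le.
Qed.


Lemma loss_eq mu A B (w w1 w2 : rect X Y -> R) :
  (forall r, w r = w1 r + w2 r) ->
  \sum_(x : X) \sum_(y : Y) restr A B mu x y * (cov w x y - cov w1 x y) =
  \sum_(r : rect X Y) w2 r * pm mu A B r.
Proof.
move=> hw; rewrite exch; apply: eq_bigr => x _; apply: eq_bigr => y _.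
have -> : cov w x y = cov w1 x y + cov w2 x y.
  by rewrite -covD /cov; apply: eq_bigr => r _; rewrite hw.
by rewrite addrAC subrr add0r.
Qed.

Lemma loss_bound (w wT p00 pb p11 : rect X Y -> R) (M00 Mb M11 s : R) :
  0 < M00 -> 0 < M11 -> 0 <= Mb -> 0 < s -> s <= 1 ->
  (forall r, wT r * (2 * s * pb r * M00 * M11) <=
             w r * (Mb * (p00 r * M11 + s ^+ 2 * p11 r * M00))) ->
  \sum_r w r * p00 r <= (s ^+ 2 * s ^+ 2 + s ^+ 2) * M00 ->
  \sum_r w r * p11 r <= M11 ->
  \sum_r wT r * pb r <= 2 * s * Mb.
Proof.
move=> h00 h11 hb hs hs1 hr hS0 hS1.
set L := \sum_r wT r * pb r.
set S0 := \sum_r w r * p00 r in hS0.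
set S1 := \sum_r w r * p11 r in hS1.
have H : L * (2 * s * M00 * M11) <= Mb * (M11 * S0 + s ^+ 2 * M00 * S1).
  have -> : Mb * (M11 * S0 + s ^+ 2 * M00 * S1) =
      \sum_r w r * (Mb * (p00 r * M11 + s ^+ 2 * p11 r * M00)).
    rewrite /S0 /S1 !mulr_sumr -big_split mulr_sumr; apply: eq_bigr => r _; change (Mb * (M11 * (w r * p00 r) + s ^+ 2 * M00 * (w r * p11 r)) = w r * (Mb * (p00 r * M11 + s ^+ 2 * p11 r * M00))); ring.
  rewrite /L mulr_suml; apply: ler_sum => r _.
  by apply: le_trans (hr r); rewrite le_eqVlt; apply/orP; left; apply/eqP; ring.
have s20 : 0 <= s ^+ 2 by rewrite exprn_ge0 // ltW.
have s21 : s ^+ 2 <= 1 by rewrite expr_le1 // ltW.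
have H2 : M11 * S0 + s ^+ 2 * M00 * S1 <= M00 * M11 * (3 * s ^+ 2).
  have a1 : M11 * S0 <= M11 * ((s ^+ 2 * s ^+ 2 + s ^+ 2) * M00) by rewrite ler_wpM2l // ltW.
  have a2 : s ^+ 2 * M00 * S1 <= s ^+ 2 * M00 * M11 by rewrite ler_wpM2l // mulr_ge0 // ltW.
  have a3 : s ^+ 2 * s ^+ 2 <= s ^+ 2 by rewrite ler_piMr.
  have a4 : M00 * M11 * (s ^+ 2 * s ^+ 2) <= M00 * M11 * s ^+ 2 by rewrite ler_wpM2l // mulr_ge0 // ltW.
  have e : M11 * ((s ^+ 2 * s ^+ 2 + s ^+ 2) * M00) + s ^+ 2 * M00 * M11 =
     M00 * M11 * (s ^+ 2 * s ^+ 2) + 2 * (M00 * M11 * s ^+ 2) by ring.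
  have e2 : M00 * M11 * (3 * s ^+ 2) = 3 * (M00 * M11 * s ^+ 2) by ring.
  lra.
have H3 : Mb * (M11 * S0 + s ^+ 2 * M00 * S1) <= Mb * (M00 * M11 * (3 * s ^+ 2)) by rewrite ler_wpM2l.
have hK : 0 < 2 * s * M00 * M11 by rewrite !mulr_gt0.
have H4 : L * (2 * s * M00 * M11) <= (3 / 2 * s * Mb) * (2 * s * M00 * M11).
  apply: le_trans H (le_trans H3 _); rewrite le_eqVlt; apply/orP; left; apply/eqP.
  by field.
rewrite ler_pM2r // in H4.
apply: le_trans H4 _.
have : 0 <= s * Mb by rewrite mulr_ge0 // ltW.
lra.
Qed.

End Help.

Unset Implicit Arguments.
Theorem mainTheorem6 (R : rcfType) (X Y : finType) (f : X -> Y -> bool)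
  (mu : X -> Y -> R)
  (hprod : exists (muX : X -> R) (muY : Y -> R), forall x y, mu x y = muX x * muY y)
  (hmu : forall x y, 0 <= mu x y <= 1)
  (eps delta : R) (heps : 0 < eps < 1) (hdelta : 0 < delta < 1)
  (w : rect X Y -> R) (hopt : srec_optimal f mu true eps delta w)
  (hD : 0 < lp_value w)
  (X0 : {set X}) (Y0 : {set Y})
  (hpos : forall (A : {set X}) (B : {set Y}),
      A \in [:: X0; ~: X0] -> B \in [:: Y0; ~: Y0] -> 0 < massR mu A B)
  (h00 : massz f (restr X0 Y0 mu) true
         <= Num.sqrt delta * massz f (restr X0 Y0 mu) false) :
  blk_concl f mu w delta (lp_value w) X0 (~: Y0) \/
  blk_concl f mu w delta (lp_value w) (~: X0) Y0.
Proof.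
case: hprod => muX [muY hXY].
case: hopt => [[hw0 hcov hz h1] _].
have hm0 x y : 0 <= mu x y by case/andP: (hmu x y).
case/andP: hdelta => hd0 hd1.
set s := Num.sqrt (Num.sqrt delta).
have hq0 : 0 <= Num.sqrt delta := sqrtr_ge0 _.
have hs0 : 0 < s by rewrite /s !sqrtr_gt0.
have hs2 : s ^+ 2 = Num.sqrt delta by rewrite /s sqr_sqrtr.
have hd4 : delta = s ^+ 2 * s ^+ 2 by rewrite hs2 -expr2 sqr_sqrtr // ltW.
have hs1 : s <= 1.
  rewrite leNgt; apply/negP => hlt.
  have a : 1 < s ^+ 2 by rewrite expr_gt1 // ltW.
  have b : 1 < s ^+ 2 * s ^+ 2 by rewrite -[1]mulr1 ltr_pM // ler01.
  lra.
set X1 := ~: X0; set Y1 := ~: Y0.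
set M := fun (A : {set X}) (B : {set Y}) => tot (restr A B mu).
have hM : forall A B, A \in [:: X0; X1] -> B \in [:: Y0; Y1] -> 0 < M A B.
  by move=> A B hA hB; rewrite /M -massR_tot; apply: hpos.
have M00 : 0 < M X0 Y0 by apply: hM; rewrite !inE eqxx.
have M01 : 0 < M X0 Y1 by apply: hM; rewrite !inE eqxx ?orbT.
have M10 : 0 < M X1 Y0 by apply: hM; rewrite !inE eqxx ?orbT.
have M11 : 0 < M X1 Y1 by apply: hM; rewrite !inE eqxx ?orbT.
set p := fun (A : {set X}) (B : {set Y}) r => pm mu A B r.
have hp0 : forall A B r, 0 <= p A B r by move=> A B r; apply: pm_ge0.
have pprod : forall r, p X0 Y0 r * p X1 Y1 r = p X0 Y1 r * p X1 Y0 r.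
  by move=> r; rewrite /p !(pm_prod _ _ _ hXY); ring.
have Mprod : M X0 Y0 * M X1 Y1 = M X0 Y1 * M X1 Y0.
  by rewrite /M -!pm_full !(pm_prod _ _ _ hXY); ring.
pose T r := p X0 Y1 r * M X1 Y0 <= p X1 Y0 r * M X0 Y1.
pose wS r := if T r then 0 else w r.
pose wT r := if T r then w r else 0.
have hsplit : forall r, w r = wS r + wT r.
  by move=> r; rewrite /wS /wT; case: (T r); rewrite ?add0r ?addr0.
have hsplit' : forall r, w r = wT r + wS r by move=> r; rewrite addrC.
have S00 : \sum_r w r * p X0 Y0 r <= (s ^+ 2 * s ^+ 2 + s ^+ 2) * M X0 Y0.
  rewrite /p exch (split_f f).
  have hPZ := tot_massz f (restr X0 Y0 mu).
  have e1 : \sum_(x : X) \sum_(y : Y | f x y == true) restr X0 Y0 mu x y * cov w x y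
      <= massz f (restr X0 Y0 mu) true.
    apply: ler_sum => x _; apply: ler_sum => y _.
    by rewrite ler_piMr // restr_ge0.
  have e2 : \sum_(x : X) \sum_(y : Y | f x y == false) restr X0 Y0 mu x y * cov w x y
      <= delta * massz f (restr X0 Y0 mu) false.
    rewrite /massz mulr_sumr; apply: ler_sum => x _.
    rewrite mulr_sumr; apply: ler_sum => y hf.
    rewrite mulrC ler_wpM2r ?restr_ge0 //; apply: hz.
    by move/eqP: hf => ->.
  have hP0 : 0 <= massz f (restr X0 Y0 mu) true.
    by apply: sumr_ge0 => x _; apply: sumr_ge0 => y _; apply: restr_ge0.
  have hZ0 : 0 <= massz f (restr X0 Y0 mu) false.
    by apply: sumr_ge0 => x _; apply: sumr_ge0 => y _; apply: restr_ge0.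
  rewrite -hs2 in h00.
  rewrite hd4 in e2.
  have hZ : massz f (restr X0 Y0 mu) false <= M X0 Y0 by rewrite /M hPZ lerDr.
  have s20 : 0 <= s ^+ 2 by rewrite exprn_ge0 // ltW.
  have s40 : 0 <= s ^+ 2 * s ^+ 2 by rewrite mulr_ge0.
  have f1 : s ^+ 2 * s ^+ 2 * massz f (restr X0 Y0 mu) false <= s ^+ 2 * s ^+ 2 * M X0 Y0.
    by rewrite ler_wpM2l.
  have f2 : s ^+ 2 * massz f (restr X0 Y0 mu) false <= s ^+ 2 * M X0 Y0.
    by rewrite ler_wpM2l.
  have e : (s ^+ 2 * s ^+ 2 + s ^+ 2) * M X0 Y0 = s ^+ 2 * s ^+ 2 * M X0 Y0 + s ^+ 2 * M X0 Y0 by ring.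
  lra.
have S11 : \sum_r w r * p X1 Y1 r <= M X1 Y1.
  rewrite /p exch /M /tot; apply: ler_sum => x _; apply: ler_sum => y _.
  by rewrite ler_piMr // restr_ge0.
have hsq : 0 <= Num.sqrt (Num.sqrt delta) by apply: sqrtr_ge0.
have hDs : lp_value wS + lp_value wT = lp_value w.
  by rewrite /lp_value -big_split; apply: eq_bigr => r _; rewrite [in RHS]hsplit.
case: (leP (lp_value wS) (9 / 10 * lp_value w)) => hS.
- left.
  have a1 : forall r, 0 <= wS r by move=> r; rewrite /wS; case: (T r).
  have a2 : forall r, wS r <= w r by move=> r; rewrite /wS; case: (T r).
  apply: (block_ok hm0 hz h1 a1 a2 M01 hS hsq).
  + rewrite (loss_eq _ _ _ hsplit) -/s.
    apply: (loss_bound (w := w) (p00 := p X0 Y0) (p11 := p X1 Y1) (M00 := M X0 Y0) (M11 := M X1 Y1)) => //.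
    * exact: ltW.
    * move=> r; rewrite /wT; case hT: (T r) => /=; last first.
        rewrite mul0r; apply: mulr_ge0 => //; apply: mulr_ge0; first exact: ltW.
        by apply: addr_ge0; apply: mulr_ge0 => //; try apply: mulr_ge0 => //; rewrite ?exprn_ge0 ?ltW.
      apply: ler_wpM2l => //.
      apply: (key (c := p X1 Y0 r) (mc := M X1 Y0)) => //; exact: ltW.
- right.
  have a1 : forall r, 0 <= wT r by move=> r; rewrite /wT; case: (T r).
  have a2 : forall r, wT r <= w r by move=> r; rewrite /wT; case: (T r).
  have hT9 : lp_value wT <= 9 / 10 * lp_value w by lra.
  apply: (block_ok hm0 hz h1 a1 a2 M10 hT9 hsq).
  + rewrite (loss_eq _ _ _ hsplit') -/s.
    apply: (loss_bound (w := w) (p00 := p X0 Y0) (p11 := p X1 Y1) (M00 := M X0 Y0) (M11 := M X1 Y1)) => //.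
    * exact: ltW.
    * move=> r; rewrite /wS; case hT: (T r) => /=.
        rewrite mul0r; apply: mulr_ge0 => //; apply: mulr_ge0; first exact: ltW.
        by apply: addr_ge0; apply: mulr_ge0 => //; try apply: mulr_ge0 => //; rewrite ?exprn_ge0 ?ltW.
      apply: ler_wpM2l => //.
      apply: (key (c := p X0 Y1 r) (mc := M X0 Y1)) => //.
      - by rewrite pprod mulrC.
      - by rewrite Mprod mulrC.
      - by move/negbT: hT; rewrite -ltNge => /ltW.
Qed.
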